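(* Let $0\le k\le n$ and $\sigma\in\mathcal D^S_k$. Then $$\sum_{\pi\in S_n,\ dp(\pi)=\sigma}(-1)^{\mathrm{inv}(\pi)}q^{\mathrm{maj}(\pi)}=(-1)^{\mathrm{inv}(\sigma)}q^{\mathrm{maj}(\sigma)}{n\brack k}_q.$$
   Context: $S_n$ is the symmetric group on $[n]$; $\mathcal D^S_k$ is the set of derangements in $S_k$ ($\sigma_i\ne i$ for all $i$), with $\mathcal D^S_0$ consisting of the empty word. $\mathrm{inv}(\sigma)=\#\{(i,j):i<j,\sigma_i>\sigma_j\}$, $\mathrm{maj}(\sigma)=\sum_{i:\sigma_i>\sigma_{i+1}}i$. For a word $w$ of distinct positive integers $a_1<\dots<a_m$, its reduction is obtained by replacing each $a_j$ by $j$. For $\pi\in S_n$, the derangement part $dp(\pi)$ is the reduction of the subword of $\pi$ consisting of the letters $\pi_i$ with $\pi_i\neq i$. $[m]_q=1+q+\dots+q^{m-1}$, $[m]_q!=[1]_q\cdots[m]_q$, $[0]_q!=1$, ${n\brack k}_q=\frac{[n]_q!}{[k]_q![n-k]_q!}$. *)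

(* Defs.v *)
From HB Require Import structures.
From mathcomp Require Import all_boot all_order all_fingroup all_algebra.
Set Implicit Arguments. Unset Strict Implicit. Unset Printing Implicit Defensive.
Import GRing.Theory.
Local Open Scope ring_scope.

(* Permutations of [n] are represented by 'S_n = {perm 'I_n}, i.e. values and
   positions are shifted to 0..n-1 (uniform shift by one). *)

Definition inv_perm n (s : 'S_n) : nat :=
  #|[set ij : 'I_n * 'I_n | (ij.1 < ij.2)%N && (s ij.2 < s ij.1)%N]|.

Definition is_derangement n (s : 'S_n) : bool := [forall i, s i != i].

(* reduction of a word of distinct naturals: each letter replaced by its rank
   (0-based, consistent with the shifted encoding) *)
Definition reduction (w : seq nat) : seq nat :=
  [seq count (fun y => (y < x)%N) w | x <- w].

Definition word n (s : 'S_n) : seq nat := [seq val (s i) | i <- enum 'I_n].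

(* maj(s) = sum of 1-based positions i with s_i > s_{i+1};
   with 0-based index i the 1-based position is i+1. *)
Definition maj_perm n (s : 'S_n) : nat :=
  \sum_(0 <= i < n.-1 | (nth 0 (word s) i.+1 < nth 0 (word s) i)%N) i.+1.

Definition dp n (p : 'S_n) : seq nat :=
  reduction [seq val (p i) | i <- enum 'I_n & p i != i].

Definition qint (m : nat) : {poly rat} := \sum_(i < m) 'X^i.
Definition qfact (m : nat) : {poly rat} := \prod_(i < m) qint i.+1.
(* q-binomial [n choose k]_q = [n]_q! / ([k]_q! [n-k]_q!) (exact polynomial division) *)
Definition qbinom (n k : nat) : {poly rat} :=
  qfact n %/ (qfact k * qfact (n - k)).

(* Main.v *)
Require Import Defs.
From HB Require Import structures.
From mathcomp Require Import all_boot all_order all_fingroup all_algebra.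
From mathcomp Require Import zify ring.
Import GRing.Theory.

Module M_P1b.
Set Implicit Arguments. Unset Strict Implicit. Unset Printing Implicit Defensive.
Import GRing.Theory.
Local Open Scope ring_scope.

Fixpoint qb (N K : nat) : {poly rat} :=
  match N, K with
  | _, 0 => 1
  | 0, _.+1 => 0
  | N'.+1, K'.+1 => qb N' K' + 'X^(K'.+1) * qb N' K'.+1
  end.

Lemma qb0 N : qb N 0 = 1. Proof. by case: N. Qed.
Lemma qbSS N K : qb N.+1 K.+1 = qb N K + 'X^(K.+1) * qb N K.+1. Proof. by []. Qed.
Lemma qb_gt N K : (N < K)%N -> qb N K = 0.
Proof.
elim: N K => [|N IH] [|K] // H.
by rewrite qbSS !IH ?mulr0 ?addr0 // ltnW.
Qed.

Lemma qintD a b : qint (a + b) = qint a + 'X^a * qint b.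
Proof.
rewrite /qint big_split_ord /=; congr (_ + _).
rewrite mulr_sumr; apply: eq_bigr => i _; by rewrite exprD.
Qed.

Lemma qfactS m : qfact m.+1 = qfact m * qint m.+1.
Proof. by rewrite /qfact big_ord_recr. Qed.
Lemma qfact0 : qfact 0 = 1.
Proof. by rewrite /qfact big_ord0. Qed.

End M_P1b.
Import M_P1b.

Module M_P1c.
Set Implicit Arguments. Unset Strict Implicit. Unset Printing Implicit Defensive.
Import GRing.Theory.
Local Open Scope ring_scope.

Lemma qbNN N : qb N N = 1.
Proof. elim: N => [|N IH]; first by []. by rewrite qbSS IH (qb_gt (ltnSn N)) mulr0 addr0. Qed.

Lemma qb_fact N K : (K <= N)%N -> qb N K * (qfact K * qfact (N - K)) = qfact N.
Proof.
elim: N K => [|N IH] [|K].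
- by move=> _; rewrite qfact0 !mulr1.
- by rewrite ltn0.
- by move=> _; rewrite qb0 subn0 qfact0 !mul1r.
- rewrite ltnS => HK. rewrite subSS qbSS.
  case: (ltnP K N) => HKN.
  + have HNK : (N - K = (N - K.+1).+1)%N by lia.
    rewrite mulrDl.
    have E1 : qb N K * (qfact K.+1 * qfact (N - K)) = qfact N * qint K.+1.
      rewrite -(IH K (ltnW HKN)) qfactS. 
      ring.
    have E2 : 'X^(K.+1) * qb N K.+1 * (qfact K.+1 * qfact (N - K)) = 'X^(K.+1) * (qfact N * qint (N - K)).
      rewrite -(IH K.+1 HKN) HNK !qfactS; set x := 'X^_; ring.
    rewrite E1 E2 qfactS mulrCA -mulrDr; congr (_ * _).
    rewrite -qintD; congr qint; lia.
  + have EK : K = N by apply/eqP; rewrite eqn_leq HK HKN.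
    rewrite EK (qb_gt (ltnSn N)) mulr0 addr0 subnn qfact0 mulr1.
    by rewrite qbNN mul1r.
Qed.

Lemma qint_neq0 m : qint m.+1 != 0.
Proof.
apply/negP => /eqP H; have := congr1 (fun p => p.[0]) H.
rewrite /qint horner_sum big_ord_recl /= hornerXn expr0 big1 ?addr0 ?horner0.
  by move/eqP; rewrite oner_eq0.
by move=> i _; rewrite hornerXn expr0n.
Qed.

Lemma qfact_neq0 m : qfact m != 0.
Proof.
elim: m => [|m IH]; first by rewrite qfact0 oner_eq0.
by rewrite qfactS mulf_neq0 // qint_neq0.
Qed.

Lemma qbinomE N K : (K <= N)%N -> qbinom N K = qb N K.
Proof.
move=> HK; rewrite /qbinom -(qb_fact HK) mulpK //.
by rewrite mulf_neq0 // qfact_neq0.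
Qed.

Lemma qb_pascal2 N K : (K <= N)%N ->
  qb N.+1 K.+1 = 'X^(N - K) * qb N K + qb N K.+1.
Proof.
move=> HK.
have HD : qfact K.+1 * qfact (N - K) != 0 by rewrite mulf_neq0 // qfact_neq0.
apply: (mulIf HD).
have -> : qb N.+1 K.+1 * (qfact K.+1 * qfact (N - K)) = qfact N.+1.
  by rewrite -(qb_fact (HK : (K.+1 <= N.+1)%N)) subSS.
rewrite mulrDl.
have E1 : 'X^(N - K) * qb N K * (qfact K.+1 * qfact (N - K)) =
          qfact N * ('X^(N - K) * qint K.+1).
  rewrite -(qb_fact HK) qfactS; set x := 'X^_; ring.
case: (ltnP K N) => HKN.
- have HNK : (N - K = (N - K.+1).+1)%N by lia.
  have E2 : qb N K.+1 * (qfact K.+1 * qfact (N - K)) = qfact N * qint (N - K).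
    by rewrite -(qb_fact HKN) HNK !qfactS; ring.
  rewrite E1 E2 qfactS -mulrDr; congr (_ * _).
  by rewrite addrC -qintD; congr qint; lia.
- have EK : K = N by apply/eqP; rewrite eqn_leq HK HKN.
  rewrite E1 EK (qb_gt (ltnSn N)) mul0r addr0 subnn expr0 mul1r qfactS.
  reflexivity.
Qed.

End M_P1c.
Import M_P1c.

Module M_P2.
Set Implicit Arguments. Unset Strict Implicit. Unset Printing Implicit Defensive.
Import GRing.Theory.
Local Open Scope ring_scope.

Section Words.
Variable f : nat -> nat.

Definition desc2 (x c : bool) (r : nat) : bool :=
  match x, c with
  | true, true => (f r.+1 < f r)%N
  | true, false => (r < f r)%N
  | false, true => (f r < r)%N
  | false, false => false
  end.

Definition desc (w : seq bool) (i : nat) : bool :=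
  desc2 (nth false w i) (nth false w i.+1) (count id (take i w)).

Definition stat (w : seq bool) : nat :=
  \sum_(0 <= i < (size w).-1 | desc w i) i.+1.

Lemma stat_rcons w c : stat (rcons w c) =
  (stat w + (if desc2 (last false w) c (count id w - last false w) then size w else 0))%N.
Proof.
case/lastP: w => [|w x].
  by rewrite /stat /= !big_geq //; case: ifP.
rewrite /stat !size_rcons /= last_rcons big_mkcond [in RHS]big_mkcond /=.
rewrite big_nat_recr //=; congr (_ + _)%N.
  apply: eq_big_nat => i /andP [_ Hi].
  rewrite /desc -!cats1 -catA !nth_cat !takel_cat ?(ltnW Hi) // Hi.
  case: ltnP => // H; have -> : (i.+1 - size w = 0)%N by lia. by [].
rewrite /desc -!cats1 -catA !nth_cat takel_cat // take_size ltnn subnn /=.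
rewrite ltnNge leqnSn /= count_cat /= addn0 addnK.
by rewrite (_ : ((size w).+1 - size w = 1)%N) ?subnn //; lia.
Qed.

Fixpoint W (L : nat) : seq (seq bool) :=
  if L is L'.+1 then [seq rcons w c | w <- W L', c <- [:: false; true]]
  else [:: [::]].

Lemma size_W L w : w \in W L -> size w = L.
Proof.
elim: L w => [|L IH] w /=; first by rewrite inE => /eqP ->.
move/flatten_mapP => [w' Hw']; rewrite !inE => /orP [] /eqP ->;
  by rewrite size_rcons (IH _ Hw').
Qed.

Lemma sum_WS (R : nmodType) L (P : pred (seq bool)) (F : seq bool -> R) :
  \sum_(w <- W L.+1 | P w) F w =
  \sum_(w <- W L | P (rcons w false)) F (rcons w false) +
  \sum_(w <- W L | P (rcons w true)) F (rcons w true).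
Proof.
rewrite [W L.+1]/=; elim: (W L) => [|w ws IH] /=; first by rewrite !big_nil addr0.
rewrite !big_cons IH; case: (P (rcons w false)); case: (P (rcons w true)).
- by rewrite -addrA; congr (_ + _); rewrite addrCA.
- by rewrite addrA.
- by rewrite addrCA.
- by [].
Qed.

Lemma count_rc (w : seq bool) c : count id (rcons w c) = (count id w + c)%N.
Proof. by rewrite -cats1 count_cat /= addn0. Qed.

Lemma last_count (w : seq bool) : last false w -> (0 < count id w)%N.
Proof. by case/lastP: w => [|w x] //=; rewrite last_rcons count_rc => ->; rewrite addn1. Qed.

Definition asum L j : {poly rat} :=
  \sum_(w <- W L | (count id w == j) && last false w) 'X^(stat w).
Definition bsum L j : {poly rat} :=
  \sum_(w <- W L | (count id w == j) && ~~ last false w) 'X^(stat w).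

Lemma asum_rec L j : asum L.+1 j.+1 =
  asum L j * 'X^(if (f j < f j.-1)%N then L else 0) +
  bsum L j * 'X^(if (f j < j)%N then L else 0).
Proof.
rewrite /asum sum_WS big_pred0 ?add0r; last first.
  by move=> w; rewrite last_rcons andbF.
rewrite (bigID (fun w => last false w)) /=.
rewrite /bsum !big_distrl /=; congr (_ + _);
  rewrite big_seq_cond [RHS]big_seq_cond; apply: eq_big.
- by move=> w; rewrite last_rcons andbT count_rc /= addn1 eqSS.
- move=> w /and3P [Hw /andP [/eqP Hc _] Hl]; rewrite stat_rcons Hl exprD (size_W Hw).
  congr (_ * _). move: Hc; rewrite count_rc /= addn1 => /eqP; rewrite eqSS => /eqP Hc.
  have Hp := last_count Hl. rewrite /= -Hc subn1.
  by rewrite (_ : (count id w).-1.+1 = count id w)%N //; lia.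
- by move=> w; rewrite last_rcons andbT count_rc /= addn1 eqSS.
- move=> w /and3P [Hw /andP [/eqP Hc _] Hl]; rewrite stat_rcons (negbTE Hl) exprD (size_W Hw).
  move: Hc; rewrite count_rc /= addn1 => /eqP; rewrite eqSS => /eqP Hc.
  by rewrite subn0 /= Hc.
Qed.

Lemma bsum_rec L j : bsum L.+1 j =
  asum L j * 'X^(if (j.-1 < f j.-1)%N then L else 0) + bsum L j.
Proof.
rewrite /bsum sum_WS [X in _ + X]big_pred0 ?addr0; last first.
  by move=> w; rewrite last_rcons andbF.
rewrite (bigID (fun w => last false w)) /=.
rewrite /asum !big_distrl /=; congr (_ + _);
  rewrite big_seq_cond [RHS]big_seq_cond; apply: eq_big.
- by move=> w; rewrite last_rcons andbT count_rc /= addn0.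
- move=> w /and3P [Hw /andP [/eqP Hc _] Hl]; rewrite stat_rcons Hl exprD (size_W Hw).
  move: Hc; rewrite count_rc /= addn0 => Hc.
  by rewrite /= -Hc subn1.
- by move=> w; rewrite last_rcons andbT count_rc /= addn0.
- move=> w /and3P [Hw /andP [/eqP Hc _] Hl]; rewrite stat_rcons (negbTE Hl) exprD.
  by rewrite expr0 mulr1.
Qed.
End Words.

End M_P2.
Import M_P2.

Module M_P3.
Set Implicit Arguments. Unset Strict Implicit. Unset Printing Implicit Defensive.
Import GRing.Theory.
Local Open Scope ring_scope.

Section Closed.
Variable f : nat -> nat.
Variable k : nat.
Hypothesis Hf : forall r, (r < k)%N -> f r != r.

Definition ee r := (r < f r)%N.
Definition base j := (\sum_(0 <= i < j.-1 | (f i.+1 < f i)%N) i.+1)%N.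

Lemma base_rec J : base J.+2 = (base J.+1 + (if (f J.+1 < f J)%N then J.+1 else 0))%N.
Proof. by rewrite /base /= big_mkcond big_nat_recr //= -big_mkcond. Qed.
Lemma base1 : base 1 = 0%N. Proof. by rewrite /base big_geq. Qed.

Lemma stepA m J : (J.+2 <= k)%N ->
 'X^(base J.+1 + (if ee J then 0 else m)%N) * qb (m+J)%N J *
    'X^(if (f J.+1 < f J)%N then (m+J.+1)%N else 0%N) +
 'X^(base J.+1) * (if ee J then 'X^(J.+1) * qb (m+J)%N J.+1 else qb (m+J)%N J.+1) *
    'X^(if (f J.+1 < J.+1)%N then (m + J.+1)%N else 0%N)
 = 'X^(base J.+2 + (if ee J.+1 then 0 else m)%N) * qb (m+J)%N.+1 J.+1 :> {poly rat}.
Proof.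
move=> HJ.
have HJ0 := Hf (ltnW HJ); have HJ1 := Hf HJ.
have P1 := qbSS (m+J) J.
have P2 := qb_pascal2 (leq_addl m J).
rewrite (_ : (m + J - J = m)%N) ?addnK // in P2.
rewrite base_rec; rewrite /ee in HJ0 HJ1 *.
move: HJ0 HJ1; set a := f J; set b := f J.+1 => HJ0 HJ1.
have Eb : (b < J.+1)%N = ~~ (J.+1 < b)%N by move/eqP: HJ1; lia.
rewrite Eb.
set B := base J.+1.
case: (ltnP J a) => Ha; case: (ltnP J.+1 b) => Hb; case: (ltnP b a) => D.
all: try (exfalso; move: HJ0 HJ1; rewrite /a /b => /eqP ? /eqP ?; lia).
all: rewrite /= ?addn0 ?expr0 ?mulr1 ?exprD.
all: first [ring | rewrite -P1 P2; ring].
Qed.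

Lemma stepB m J :
 'X^(base J.+1 + (if ee J then 0 else m)%N) * qb (m+J)%N J *
    'X^(if (J < f J)%N then (m+J.+1)%N else 0%N) +
 'X^(base J.+1) * (if ee J then 'X^(J.+1) * qb (m+J)%N J.+1 else qb (m+J)%N J.+1)
 = 'X^(base J.+1) * (if ee J then 'X^(J.+1) * qb (m+J)%N.+1 J.+1 else qb (m+J)%N.+1 J.+1)
   :> {poly rat}.
Proof.
have P2 := qb_pascal2 (leq_addl m J).
rewrite (_ : (m + J - J = m)%N) ?addnK // in P2.
rewrite P2 /ee; case: (J < f J)%N; rewrite /= ?addn0 ?expr0 ?mulr1 ?exprD; ring.
Qed.

Definition Aform L j : {poly rat} :=
  match j with
  | 0 => 0
  | J.+1 => if (J < L)%N then 'X^(base J.+1 + (if ee J then 0 else L - J.+1)%N) * qb L.-1 J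
            else 0
  end.
Definition Bform L j : {poly rat} :=
  match j with
  | 0 => 1
  | J.+1 => if (J < L)%N then
      'X^(base J.+1) * (if ee J then 'X^(J.+1) * qb L.-1 J.+1 else qb L.-1 J.+1)
      else 0
  end.

Lemma asum0 L : asum f L 0 = 0.
Proof.
rewrite /asum big_pred0 // => w; apply/negbTE; apply/andP => [[/eqP Hc Hl]].
by have := last_count Hl; rewrite Hc.
Qed.

Lemma bsum0 L : bsum f L 0 = 1.
Proof.
elim: L => [|L IH].
  by rewrite /bsum /= big_cons big_nil /= /stat /= big_geq // expr0 addr0.
by rewrite bsum_rec asum0 mul0r add0r IH.
Qed.

Lemma closed_forms L j : (j <= k)%N -> asum f L j = Aform L j /\ bsum f L j = Bform L j.
Proof.
elim: L j => [|L IH] j Hj.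
  case: j Hj => [|J] Hj /=.
    by rewrite asum0 bsum0.
  by rewrite /asum /bsum /= !big_cons !big_nil /=; split; reflexivity.
case: j Hj => [|J] Hj; first by rewrite asum0 bsum0.
split.
- rewrite asum_rec /=.
  case: J Hj => [|J] Hj.
    rewrite asum0 bsum0 mul0r add0r ltn0 expr0 /= base1 add0n.
    have H0 := Hf Hj; rewrite /ee (_ : (0 < f 0)%N = true); last by move: H0; lia.
    by rewrite qb0 expr0 mulr1.
  have [IHa IHb] := IH J.+1 (ltnW Hj).
  rewrite IHa IHb /=.
  case: (ltnP J L) => HJL.
  + have [m Em] : exists m, L = (m + J.+1)%N by exists (L - J.+1)%N; lia.
    rewrite (_ : (J.+1 < L.+1)%N = true); last by lia.
    rewrite Em.
    rewrite (_ : ((m + J.+1).+1 - J.+2 = m)%N); last by lia.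
    rewrite (_ : ((m + J.+1) - J.+1 = m)%N); last by lia.
    rewrite (_ : ((m + J.+1).-1 = m + J)%N); last by lia.
    rewrite (_ : qb (m + J.+1) J.+1 = qb (m + J).+1 J.+1); last by rewrite addnS.
    exact: stepA.
    rewrite (_ : (J.+1 < L.+1)%N = false); last by lia.
    by rewrite !mul0r add0r.
- rewrite bsum_rec /=.
  have [IHa IHb] := IH J.+1 Hj.
  rewrite IHa IHb /=.
  case: (ltnP J L) => HJL.
  + have [m Em] : exists m, L = (m + J.+1)%N by exists (L - J.+1)%N; lia.
    rewrite (_ : (J < L.+1)%N = true); last by lia.
    rewrite Em.
    rewrite (_ : ((m + J.+1) - J.+1 = m)%N); last by lia.
    rewrite (_ : ((m + J.+1).-1 = m + J)%N); last by lia.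
    rewrite (_ : qb (m + J.+1) J.+1 = qb (m + J).+1 J.+1); last by rewrite addnS.
    exact: stepB.
  + rewrite mul0r add0r.
    case: ifP => H //.
    have EL : L = J by lia.
    by rewrite EL (qb_gt (ltnSn J)) mulr0 if_same mulr0.
Qed.

Lemma words_total n : (k <= n)%N ->
  \sum_(w <- W n | count id w == k) 'X^(stat f w) = 'X^(base k) * qb n k :> {poly rat}.
Proof.
move=> Hkn.
rewrite (bigID (fun w => last false w)) /=.
have [Ha Hb] := closed_forms n (leqnn k).
rewrite /asum /bsum in Ha Hb; rewrite Ha Hb.
case: k Hkn Hf Ha Hb => [|K] Hkn Hf' _ _ /=.
  by rewrite add0r /base /= big_geq // expr0 mul1r qb0.
rewrite Hkn.
case: n Hkn => [|N] HN //.
have P1 := qbSS N K.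
have P2 := qb_pascal2 (HN : (K <= N)%N).
rewrite (_ : (N.+1 - K.+1 = N - K)%N); last by lia.
rewrite /= in P1 *; case: (ee K).
- by rewrite addn0; ring.
- by rewrite /= in P2; rewrite P2 exprD; ring.
Qed.
End Closed.

End M_P3.
Import M_P3.

Module M_P4.
Set Implicit Arguments. Unset Strict Implicit. Unset Printing Implicit Defensive.

Section Pos.
Variable w : seq bool.
Definition pos := [seq i <- iota 0 (size w) | nth false w i].
Definition rank i := count id (take i w).

Lemma pos_sorted : sorted ltn pos.
Proof. by apply: sorted_filter; [exact: ltn_trans | exact: iota_ltn_sorted]. Qed.
Lemma pos_uniq : uniq pos.
Proof. exact: filter_uniq (iota_uniq _ _). Qed.
Lemma count_take_iota i : (i <= size w)%N ->
  count (nth false w) (iota 0 i) = rank i.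
Proof. by move=> Hi; rewrite /rank -(map_nth_iota0 false Hi) count_map. Qed.
Lemma size_pos : size pos = count id w.
Proof. by rewrite size_filter count_take_iota // /rank take_size. Qed.
Lemma mem_pos i : (i \in pos) = (i < size w)%N && nth false w i.
Proof. by rewrite mem_filter mem_iota add0n andbC. Qed.

Lemma pos_lt x y : (x < size pos)%N -> (y < size pos)%N ->
  (nth 0 pos x < nth 0 pos y)%N = (x < y)%N.
Proof.
move=> Hx Hy.
have H := sorted_ltn_nth (@ltn_trans) 0 pos_sorted.
case: (ltngtP x y) => Hxy.
- exact: H.
- by apply/negbTE; rewrite -leqNgt ltnW // H.
- by rewrite Hxy ltnn.
Qed.

Lemma pos_eq x y : (x < size pos)%N -> (y < size pos)%N ->
  (nth 0 pos x == nth 0 pos y) = (x == y).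
Proof.
move=> Hx Hy; case: (ltngtP x y) => H.
- by apply/negbTE; rewrite neq_ltn pos_lt // H.
- by apply/negbTE; rewrite neq_ltn (pos_lt Hy Hx) H orbT.
- by rewrite H eqxx.
Qed.

Lemma rank_lt i : (i < size w)%N -> nth false w i -> (rank i < count id w)%N.
Proof.
move=> Hi Hw; rewrite /rank -{2}(cat_take_drop i w) count_cat (drop_nth false Hi) /= Hw.
by rewrite addnS ltnS leq_addr.
Qed.

Lemma pos_rank i : (i < size w)%N -> nth false w i -> nth 0 pos (rank i) = i.
Proof.
move=> Hi Hw.
have E : iota 0 (size w) = iota 0 i ++ i :: iota i.+1 (size w - i.+1).
  rewrite -{1}(subnKC Hi) -addn1 !iotaD -catA !add0n addn1. by [].
rewrite /pos E filter_cat /= Hw -count_take_iota ?(ltnW Hi) // -size_filter nth_cat ltnn subnn.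
by [].
Qed.

Lemma count_lt_iota t N : (t <= N)%N -> count (fun r => r < t)%N (iota 0 N) = t.
Proof.
move=> H; rewrite -(subnKC H) iotaD count_cat add0n.
rewrite (eq_in_count (a2 := predT)); last by move=> x; rewrite mem_iota.
rewrite count_predT size_iota (eq_in_count (a2 := pred0)); last first.
  by move=> x; rewrite mem_iota /=; lia.
by rewrite count_pred0 addn0.
Qed.

Lemma pos_count t : (t < size pos)%N -> count (fun y => y < nth 0 pos t)%N pos = t.
Proof.
move=> Ht.
have E : pos = map (nth 0 pos) (iota 0 (size pos)) by rewrite map_nth_iota0 // take_size.
rewrite [X in count _ X]E count_map.
rewrite (eq_in_count (a2 := fun r => r < t)%N); last first.
  by move=> r; rewrite mem_iota /= => Hr; rewrite pos_lt.
by rewrite count_lt_iota // ltnW.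
Qed.
End Pos.

End M_P4.
Import M_P4.

Module M_P5.
Set Implicit Arguments. Unset Strict Implicit. Unset Printing Implicit Defensive.

Lemma nth_word m (q : 'S_m) (i : 'I_m) : nth 0 (word q) i = val (q i).
Proof. by rewrite /word (nth_map i) ?size_enum_ord // nth_ord_enum. Qed.
Lemma size_word m (q : 'S_m) : size (word q) = m.
Proof. by rewrite /word size_map size_enum_ord. Qed.

Lemma word_perm m (q : 'S_m) : perm_eq (word q) (iota 0 m).
Proof.
apply: uniq_perm.
- rewrite /word map_inj_uniq ?enum_uniq // => i j /val_inj; exact: perm_inj.
- exact: iota_uniq.
- move=> x; rewrite mem_iota add0n /=; apply/mapP/idP.
    by move=> [i _ ->]; exact: ltn_ord.
  move=> Hx; exists ((q^-1)%g (Ordinal Hx)); first by rewrite mem_enum.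
  by rewrite permKV.
Qed.


Lemma sum_bool_count (T : Type) (a : pred T) s : (\sum_(i <- s) (a i : nat))%N = count a s.
Proof. by elim: s => [|x s IH]; rewrite ?big_nil ?big_cons ?IH. Qed.

Lemma count_split (T : Type) (a b : pred T) s :
  count a s = (count (fun x => a x && b x) s + count (fun x => a x && ~~ b x) s)%N.
Proof. elim: s => [|x s IH] //=; rewrite IH; case: (a x); case: (b x) => /=; lia. Qed.

Lemma sum_split (T : eqType) (a : pred T) s (G : T -> nat) :
  (\sum_(i <- s) G i = \sum_(i <- filter a s) G i + \sum_(i <- filter (predC a) s) G i)%N.
Proof. by rewrite !big_filter (bigID a). Qed.

Lemma inv_sum m (q : 'S_m) : inv_perm q =
  (\sum_(i <- iota 0 m) \sum_(j <- iota 0 m)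
      ((i < j) && (nth 0 (word q) j < nth 0 (word q) i)%N : nat))%N.
Proof.
rewrite /inv_perm -sum1_card big_mkcond /=.
rewrite (eq_bigr (fun ij : 'I_m * 'I_m => ((ij.1 < ij.2)%N && (q ij.2 < q ij.1)%N : nat)));
  last by move=> ij _; rewrite in_set; case: ifP.
rewrite -(pair_bigA _ (fun (i j : 'I_m) => ((i < j)%N && (q j < q i)%N : nat))) /=.
rewrite -val_enum_ord big_map /= [in RHS]big_enum /=.
apply: eq_bigr => i _; rewrite big_map big_enum /=; apply: eq_bigr => j _.
by rewrite !nth_word.
Qed.

Section Perm.
Variables (n k : nat) (sigma : 'S_k).
Hypothesis Hder : is_derangement sigma.
Let f := nth 0 (word sigma).

Lemma fE r (Hr : (r < k)%N) : f r = val (sigma (Ordinal Hr)).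
Proof. exact: (nth_word sigma (Ordinal Hr)). Qed.
Lemma f_lt r : (r < k)%N -> (f r < k)%N.
Proof. by move=> Hr; rewrite (fE Hr) ltn_ord. Qed.
Lemma f_neq r : (r < k)%N -> f r != r.
Proof.
move=> Hr; rewrite (fE Hr); move/forallP: Hder => /(_ (Ordinal Hr)).
by apply: contra => /eqP H; apply/eqP/val_inj.
Qed.
Lemma f_inj r r' : (r < k)%N -> (r' < k)%N -> f r = f r' -> r = r'.
Proof.
move=> Hr Hr'; rewrite (fE Hr) (fE Hr') => /val_inj /perm_inj H.
by have := congr1 val H.
Qed.
Lemma word_f : word sigma = map f (iota 0 k).
Proof.
apply: (@eq_from_nth _ 0); first by rewrite size_map size_iota size_word.
move=> i; rewrite size_word => Hi.
by rewrite (nth_map 0) ?size_iota // nth_iota.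
Qed.

Definition sp (p : 'S_n) : seq bool := [seq p i != i | i <- enum 'I_n].
Lemma size_sp p : size (sp p) = n.
Proof. by rewrite size_map size_enum_ord. Qed.
Lemma nth_sp p (i : 'I_n) : nth false (sp p) i = (p i != i).
Proof. by rewrite (nth_map i) ?size_enum_ord // nth_ord_enum. Qed.

Definition Good0 (w : seq bool) (p : 'S_n) :=
  size w = n /\ forall i : 'I_n, nth false w i = (p i != i).

Lemma N_pos w p : Good0 w p ->
  map val [seq i <- enum 'I_n | p i != i] = pos w.
Proof.
move=> [Hs Hw]; rewrite /pos Hs -val_enum_ord filter_map; congr map.
by apply: eq_filter => i; rewrite /= Hw.
Qed.

Definition Good (w : seq bool) (p : 'S_n) :=
  [/\ size w = n, count id w = k,
      forall i : 'I_n, nth false w i = (p i != i) &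
      forall i : 'I_n, nth false w i -> val (p i) = nth 0 (pos w) (f (rank w i))].

Lemma rank_pos w r : (r < size (pos w))%N -> rank w (nth 0 (pos w) r) = r.
Proof.
move=> Hr.
have Hm : nth 0 (pos w) r \in pos w by exact: mem_nth.
move: (Hm); rewrite mem_pos => /andP [Hi Hw].
have Hrk := rank_lt Hi Hw; rewrite -size_pos in Hrk.
apply/eqP; rewrite -(pos_eq (w := w)) //.
by rewrite pos_rank.
Qed.

Lemma pos_map w : pos w = map (nth 0 (pos w)) (iota 0 (size (pos w))).
Proof. by rewrite map_nth_iota0 // take_size. Qed.


Lemma good_u w p : Good w p ->
  [seq val (p i) | i <- enum 'I_n & p i != i] = map (nth 0 (pos w)) (word sigma).
Proof.
move=> [Hs Hc Hw Hv].
have HN := N_pos (conj Hs Hw).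
rewrite (_ : map _ _ = map ((fun x => nth 0 (pos w) (f (rank w x))) \o val)
   [seq i <- enum 'I_n | p i != i]); last first.
  apply/eq_in_map => i; rewrite mem_filter => /andP [Hi _] /=; apply: Hv; by rewrite Hw.
have EP := pos_map w; rewrite size_pos Hc in EP.
rewrite map_comp HN [X in map _ X]EP -map_comp word_f -map_comp.
apply/eq_in_map => r; rewrite mem_iota add0n => Hr /=.
by rewrite rank_pos // size_pos Hc.
Qed.

Lemma good_dp w p : Good w p -> dp p = word sigma.
Proof.
move=> G; have [Hs Hc Hw Hv] := G.
rewrite /dp /reduction (good_u G).
have Hperm : perm_eq (map (nth 0 (pos w)) (word sigma)) (pos w).
  rewrite [X in perm_eq _ X]pos_map size_pos Hc; exact: perm_map (word_perm sigma).
rewrite -map_comp -[RHS]map_id; apply/eq_in_map => y Hy /=.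
rewrite (seq.permP Hperm) pos_count // size_pos Hc.
by move: Hy; rewrite (perm_mem (word_perm sigma)) mem_iota.
Qed.

Lemma perm_N (p : 'S_n) :
  perm_eq (map p [seq i <- enum 'I_n | p i != i]) [seq i <- enum 'I_n | p i != i].
Proof.
set N := [seq i <- enum 'I_n | p i != i].
have UN : uniq N by rewrite filter_uniq // enum_uniq.
have UM : uniq (map p N) by rewrite map_inj_uniq //; exact: perm_inj.
have Hsub : {subset map p N <= N}.
  move=> x /mapP [i]; rewrite mem_filter => /andP [Hi _] ->.
  rewrite mem_filter mem_enum andbT; apply: contra Hi => /eqP H.
  by apply/eqP; apply: (perm_inj H).
have [_ Heq] := uniq_min_size UM Hsub (eq_leq (esym (size_map p N))).
exact: uniq_perm.
Qed.

Lemma dp_good p : dp p = word sigma -> Good (sp p) p.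
Proof.
move=> Hdp.
set w := sp p.
have Hs : size w = n by exact: size_sp.
have Hw : forall i : 'I_n, nth false w i = (p i != i) by move=> i; exact: nth_sp.
have HN := N_pos (conj Hs Hw).
set N := [seq i <- enum 'I_n | p i != i] in HN.
set u := [seq val (p i) | i <- enum 'I_n & p i != i].
have Hu : u = map val (map p N) by rewrite /u -map_comp.
have Hup : perm_eq u (pos w) by rewrite Hu -HN; apply: perm_map; exact: perm_N.
have Hsize : size u = size (pos w) by exact: perm_size.
have Hdpu : dp p = [seq count (fun y => y < x)%N u | x <- u] by [].
have Hc : count id w = k.
  by rewrite -size_pos -Hsize -(size_word sigma) -Hdp Hdpu size_map.
split => // i Hi.
set r := rank w i.
have Hin : (i < size w)%N by rewrite Hs ltn_ord.
have Hrk : (r < size (pos w))%N by rewrite size_pos; exact: rank_lt.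
have HsN : size N = size (pos w) by rewrite -HN size_map.
have HNr : nth i N r = i.
  by apply: val_inj => /=; rewrite -(nth_map i 0 val) ?HsN // HN pos_rank.
have Hur : nth 0 u r = val (p i).
  by rewrite Hu -map_comp (nth_map i) ?HsN // /= HNr.
have Hfr : f r = count (fun y => y < nth 0 u r)%N u.
  change (nth 0 (word sigma) r = count (fun y => y < nth 0 u r)%N u); rewrite -Hdp Hdpu (nth_map 0) //; by rewrite Hsize.
rewrite -Hur.
have Hmem : nth 0 u r \in pos w by rewrite -(perm_mem Hup) mem_nth // Hsize.
rewrite Hfr (seq.permP Hup) -{1 2}(nth_index 0 Hmem) pos_count ?nth_index //.
by rewrite index_mem.
Qed.

Lemma rank_S w i : (i < size w)%N -> rank w i.+1 = (rank w i + nth false w i)%N.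
Proof. by move=> Hi; rewrite /rank (take_nth false Hi) count_rc. Qed.

Lemma good_desc w p i (Hi : (i.+1 < n)%N) : Good w p ->
  (nth 0 (word p) i.+1 < nth 0 (word p) i)%N = desc f w i.
Proof.
move=> [Hs Hc Hw Hv].
have Ha : (i < n)%N by apply: ltnW.
rewrite -[i]/(val (Ordinal Ha)) -[i.+1]/(val (Ordinal Hi)) !nth_word.
rewrite /desc /=.
set a := Ordinal Ha; set b := Ordinal Hi.
have Hwa := Hw a; have Hwb := Hw b; have Hva := Hv a; have Hvb := Hv b.
rewrite /= in Hwa Hwb Hva Hvb.
have Hia : (i < size w)%N by rewrite Hs.
have Hib : (i.+1 < size w)%N by rewrite Hs.
have Hsp : size (pos w) = k by rewrite size_pos.
have HrS := rank_S Hia.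
set r := rank w i in HrS Hva *.
rewrite HrS in Hvb.
case Ewa : (nth false w i) in Hwa Hva HrS Hvb *;
case Ewb : (nth false w i.+1) in Hwb Hvb *.
-
  have Hr : (r < k)%N by rewrite -Hc; exact: rank_lt.
  have Hr1 : (r.+1 < k)%N.
    rewrite -Hc addn1 in HrS *; rewrite -HrS; exact: rank_lt.
  rewrite Hva // Hvb // addn1 pos_lt // Hsp; exact: f_lt.
-
  have Hr : (r < k)%N by rewrite -Hc; exact: rank_lt.
  have Hpb : p b = b by apply/eqP/negbFE; rewrite -Hwb.
  rewrite Hpb Hva //= .
  have Hfr := f_lt Hr; have Hne := f_neq Hr.
  have HPr : nth 0 (pos w) r = i by apply: pos_rank.
  have Hmem : nth 0 (pos w) (f r) \in pos w by rewrite mem_nth // Hsp.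
  have Hnot : nth 0 (pos w) (f r) != i.+1.
    apply: contraTneq Hmem => ->; by rewrite mem_pos Ewb andbF.
  case: (ltngtP r (f r)) => H.
  + have := pos_lt (w := w) (x := r) (y := f r); rewrite HPr Hsp H => /(_ Hr Hfr) H2.
    move: Hnot H2; lia.
  + have := pos_lt (w := w) (x := f r) (y := r); rewrite HPr Hsp H => /(_ Hfr Hr) H2.
    apply/negbTE; move: H2; lia.
  + by move: Hne; rewrite -H eqxx.
-
  have Hpa : p a = a by apply/eqP/negbFE; rewrite -Hwa.
  rewrite addn0 in HrS.
  have Hr : (r < k)%N by rewrite -Hc -HrS; apply: rank_lt; rewrite // Ewb.
  rewrite Hpa Hvb //=.
  have Hfr := f_lt Hr; have Hne := f_neq Hr.
  have HPr : nth 0 (pos w) r = i.+1 by rewrite -HrS; apply: pos_rank; rewrite // Ewb.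
  have Hmem : nth 0 (pos w) (f r) \in pos w by rewrite mem_nth // Hsp.
  have Hnot : nth 0 (pos w) (f r) != i.
    apply: contraTneq Hmem => ->; by rewrite mem_pos Ewa andbF.
  case: (ltngtP r (f r)) => H.
  + have := pos_lt (w := w) (x := r) (y := f r); rewrite HPr Hsp H => /(_ Hr Hfr) H2.
    apply/negbTE; move: H2; rewrite ?addn0; lia.
  + have := pos_lt (w := w) (x := f r) (y := r); rewrite HPr Hsp H => /(_ Hfr Hr) H2.
    move: Hnot H2; rewrite ?addn0; lia.
  + by move: Hne; rewrite -H eqxx.
-
  have Hpa : p a = a by apply/eqP/negbFE; rewrite -Hwa.
  have Hpb : p b = b by apply/eqP/negbFE; rewrite -Hwb.
  by rewrite Hpa Hpb /= ltnNge leqnSn.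
Qed.

Lemma good_maj w p : Good w p -> maj_perm p = stat f w.
Proof.
move=> G; have [Hs _ _ _] := G.
rewrite /maj_perm /stat Hs big_mkcond [RHS]big_mkcond; apply: eq_big_nat => i /andP [_ Hi].
rewrite (good_desc (w := w) _ G); first by []. lia.
Qed.

Lemma good_sp w p : Good w p -> sp p = w.
Proof.
move=> [Hs Hc Hw Hv]; apply: (@eq_from_nth _ false); first by rewrite size_sp.
move=> i; rewrite size_sp => Hi.
by rewrite -[i]/(val (Ordinal Hi)) nth_sp Hw.
Qed.

Lemma good_uniq w p p' : Good w p -> Good w p' -> p = p'.
Proof.
move=> [Hs Hc Hw Hv] [_ _ Hw' Hv']; apply/permP => i.
case E : (nth false w i).
- by apply: val_inj; rewrite Hv // Hv'.
- have H1 := Hw i; have H2 := Hw' i; rewrite E in H1 H2.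
  have -> : p i = i by apply/eqP/negbFE; rewrite -H1.
  by have -> : p' i = i by apply/eqP/negbFE; rewrite -H2.
Qed.

Lemma good_exists w : size w = n -> count id w = k -> exists p, Good w p.
Proof.
move=> Hs Hc.
have Hsp : size (pos w) = k by rewrite size_pos.
pose g (i : 'I_n) : 'I_n :=
  if nth false w i then insubd i (nth 0 (pos w) (f (rank w i))) else i.
have Hbnd : forall i : 'I_n, nth false w i ->
   [/\ (rank w i < k)%N, (f (rank w i) < k)%N, nth 0 (pos w) (f (rank w i)) \in pos w
     & val (g i) = nth 0 (pos w) (f (rank w i))].
  move=> i Hi.
  have Hin : (i < size w)%N by rewrite Hs ltn_ord.
  have Hr : (rank w i < k)%N by rewrite -Hc; exact: rank_lt.
  have Hfr := f_lt Hr.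
  have Hm : nth 0 (pos w) (f (rank w i)) \in pos w by rewrite mem_nth // Hsp.
  split => //; rewrite /g Hi val_insubd.
  by move: (Hm); rewrite mem_pos Hs => /andP [-> _].
have Hg0 : forall i : 'I_n, ~~ nth false w i -> g i = i.
  by move=> i Hi; rewrite /g (negbTE Hi).
have ginj : injective g.
  move=> i j Hij.
  case Ei : (nth false w i); case Ej : (nth false w j).
  - have [Hri Hfi Hmi Hvi] := Hbnd i Ei; have [Hrj Hfj Hmj Hvj] := Hbnd j Ej.
    have := congr1 val Hij; rewrite Hvi Hvj => /eqP; rewrite pos_eq ?Hsp // => /eqP.
    move/(f_inj Hri Hrj) => Hr.
    apply: val_inj.
    have Hin : (i < size w)%N by rewrite Hs ltn_ord.
    have Hjn : (j < size w)%N by rewrite Hs ltn_ord.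
    change (nat_of_ord i = nat_of_ord j); by rewrite -(pos_rank Hin Ei) -(pos_rank Hjn Ej) Hr.
  - have [_ _ Hmi Hvi] := Hbnd i Ei.
    have := congr1 val Hij; rewrite Hvi Hg0 ?Ej // => E.
    by move: Hmi; rewrite E mem_pos Ej andbF.
  - have [_ _ Hmj Hvj] := Hbnd j Ej.
    have := congr1 val Hij; rewrite Hvj Hg0 ?Ei // => E.
    by move: Hmj; rewrite -E mem_pos Ei andbF.
  - by rewrite -(Hg0 i) ?Ei // -(Hg0 j) ?Ej.
exists (perm ginj); split => // [i|i Hi]; rewrite permE.
- case Ei : (nth false w i).
  + have [Hr Hfr Hm Hv] := Hbnd i Ei.
    apply/esym/negP => /eqP /(congr1 val); rewrite Hv.
    have Hin : (i < size w)%N by rewrite Hs ltn_ord.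
    change (nth 0 (pos w) (f (rank w i)) = nat_of_ord i -> False).
    rewrite -{2}(pos_rank Hin Ei) => /eqP; rewrite pos_eq ?Hsp //.
    by apply/negP; exact: f_neq.
  + by rewrite Hg0 ?Ei // eqxx.
- by have [_ _ _ ->] := Hbnd i Hi.
Qed.

Lemma good_v w p x : Good w p -> x \in pos w ->
  nth 0 (word p) x = nth 0 (pos w) (f (rank w x)).
Proof.
move=> [Hs Hc Hw Hv]; rewrite mem_pos Hs => /andP [Hx Hwx].
by rewrite -[x]/(val (Ordinal Hx)) nth_word Hv.
Qed.

Lemma good_v0 w p x : Good w p -> (x < n)%N -> ~~ nth false w x -> nth 0 (word p) x = x.
Proof.
move=> [Hs Hc Hw Hv] Hx Hwx.
rewrite -[x]/(val (Ordinal Hx)) nth_word; congr val; apply/eqP/negbFE.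
by rewrite -Hw (negbTE Hwx).
Qed.

Lemma good_vmap w p : Good w p ->
  map (nth 0 (word p)) (pos w) = map (nth 0 (pos w)) (word sigma).
Proof.
move=> G; have [Hs Hc _ _] := G.
have EP := pos_map w; rewrite size_pos Hc in EP.
rewrite [X in map _ X]EP -map_comp word_f -map_comp.
apply/eq_in_map => r; rewrite mem_iota add0n => Hr /=.
rewrite (good_v G); last by rewrite mem_nth // size_pos Hc.
by rewrite rank_pos // size_pos Hc.
Qed.

Lemma good_count w p x : Good w p -> (x < n)%N -> ~~ nth false w x ->
  count (fun a => (a < x) && (x < nth 0 (word p) a))%N (pos w) =
  count (fun a => (x < a) && (nth 0 (word p) a < x))%N (pos w).
Proof.
move=> G Hx Hwx; have [Hs Hc _ _] := G.
set v := nth 0 (word p).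
have Hperm : perm_eq (map v (pos w)) (pos w).
  rewrite (good_vmap G) [X in perm_eq _ X]pos_map size_pos Hc.
  exact: perm_map (word_perm sigma).
have Hxn : x \notin pos w by rewrite mem_pos negb_and Hwx orbT.
have Hvin : forall a, a \in pos w -> v a \in pos w.
  move=> a Ha; rewrite -(perm_mem Hperm); exact: map_f.
have h1 : count (fun a => a < x)%N (pos w) = count (fun a => v a < x)%N (pos w).
  by rewrite -(seq.permP Hperm (fun a => a < x)%N) count_map.
rewrite (count_split (fun a => a < x)%N (fun a => v a < x)%N) in h1.
rewrite [X in _ = X](count_split (fun a => v a < x)%N (fun a => a < x)%N) in h1.
have E1 : count (fun a => (a < x) && ~~ (v a < x))%N (pos w) =
          count (fun a => (a < x) && (x < v a))%N (pos w).
  apply: eq_in_count => a Ha /=; congr andb.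
  have : v a != x by apply: contraNneq Hxn => <-; exact: Hvin.
  lia.
have E2 : count (fun a => (v a < x) && ~~ (a < x))%N (pos w) =
          count (fun a => (x < a) && (v a < x))%N (pos w).
  apply: eq_in_count => a Ha /=; rewrite andbC; congr andb.
  have : a != x by apply: contraNneq Hxn => <-.
  lia.
have E3 : count (fun a => (a < x) && (v a < x))%N (pos w) =
          count (fun a => (v a < x) && (a < x))%N (pos w).
  by apply: eq_count => a; rewrite andbC.
move: h1; rewrite E1 E2 E3; lia.
Qed.

Lemma good_inv w p : Good w p -> odd (inv_perm p) = odd (inv_perm sigma).
Proof.
move=> G; have [Hs Hc Hw Hv] := G.
rewrite !inv_sum.
set v := nth 0 (word p).
have HP : [seq i <- iota 0 n | nth false w i] = pos w by rewrite /pos Hs.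
set Q := [seq i <- iota 0 n | predC (nth false w) i].
have HQ : forall x, x \in Q -> (x < n)%N /\ ~~ nth false w x.
  by move=> x; rewrite mem_filter mem_iota add0n /= => /andP [].
have ES : (\sum_(i <- iota 0 n) \sum_(j <- iota 0 n) ((i < j) && (v j < v i) : nat) =
  (\sum_(i <- pos w) \sum_(j <- pos w) ((i < j) && (v j < v i) : nat) +
   \sum_(i <- pos w) \sum_(j <- Q) ((i < j) && (v j < v i) : nat)) +
  (\sum_(i <- Q) \sum_(j <- pos w) ((i < j) && (v j < v i) : nat) +
   \sum_(i <- Q) \sum_(j <- Q) ((i < j) && (v j < v i) : nat)))%N.
  rewrite (sum_split (nth false w)) HP; congr (_ + _); rewrite -big_split;
    apply: eq_bigr => i _; by rewrite (sum_split (nth false w)) HP.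
rewrite ES.
have QQ : (\sum_(i <- Q) \sum_(j <- Q) ((i < j) && (v j < v i) : nat))%N = 0%N.
  rewrite big_seq_cond; apply: big1 => i /andP [Hi _]; rewrite big_seq_cond; apply: big1 => j /andP [Hj _].
  have [Hin Hwi] := HQ i Hi; have [Hjn Hwj] := HQ j Hj.
  rewrite /v (good_v0 G Hin Hwi) (good_v0 G Hjn Hwj).
  by case: (ltngtP i j).
have PP : (\sum_(i <- pos w) \sum_(j <- pos w) ((i < j) && (v j < v i) : nat))%N =
   (\sum_(i <- iota 0 k) \sum_(j <- iota 0 k)
      ((i < j) && (nth 0 (word sigma) j < nth 0 (word sigma) i) : nat))%N.
  have EP := pos_map w; rewrite size_pos Hc in EP.
  rewrite EP big_map; rewrite big_seq_cond [RHS]big_seq_cond; apply: eq_bigr => r /andP [Hr _].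
  rewrite big_map big_seq_cond [RHS]big_seq_cond; apply: eq_bigr => r' /andP [Hr' _].
  move: Hr Hr'; rewrite !mem_iota !add0n => Hr Hr'.
  have Hsp : size (pos w) = k by rewrite size_pos.
  rewrite /v !(good_v G) ?mem_nth ?Hsp // !rank_pos ?Hsp // !pos_lt ?Hsp //; exact: f_lt.
have MIX : exists M, (\sum_(i <- pos w) \sum_(j <- Q) ((i < j) && (v j < v i) : nat) +
                      \sum_(i <- Q) \sum_(j <- pos w) ((i < j) && (v j < v i) : nat))%N = M.*2.
  exists (\sum_(x <- Q) count (fun a => (a < x) && (x < v a))%N (pos w))%N.
  rewrite exchange_big /= -big_split /= -mul2n big_distrr /=.
  rewrite big_seq_cond [RHS]big_seq_cond; apply: eq_bigr => x /andP [Hx _].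
  have [Hxn Hwx] := HQ x Hx.
  rewrite !sum_bool_count.
  rewrite (eq_count (a2 := fun a => (a < x) && (x < v a))%N); last first.
    by move=> a /=; rewrite /v (good_v0 G Hxn Hwx).
  rewrite [X in (_ + X)%N](eq_count (a2 := fun a => (x < a) && (v a < x))%N); last first.
    by move=> a /=; rewrite /v (good_v0 G Hxn Hwx).
  rewrite -(good_count G Hxn Hwx) /v; lia.
have [M HM] := MIX.
by rewrite QQ addn0 -PP -addnA HM oddD odd_double addbF.
Qed.
End Perm.

End M_P5.
Import M_P5.

Module M_P6.
Set Implicit Arguments. Unset Strict Implicit. Unset Printing Implicit Defensive.
Import GRing.Theory.
Local Open Scope ring_scope.

Lemma mem_W L w : (w \in W L) = (size w == L).
Proof.
apply/idP/idP; first by move/size_W => ->.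
elim: L w => [|L IH] w.
  by move/eqP/size0nil => ->; rewrite inE.
case/lastP: w => [|w c] //; rewrite size_rcons eqSS => /IH Hw /=.
apply/flatten_mapP; exists w => //; by case: c; rewrite !inE eqxx ?orbT.
Qed.

Lemma uniq_W L : uniq (W L).
Proof.
elim: L => [|L IH]; first by [].
change (uniq [seq rcons w c | w <- W L, c <- [:: false; true]]).
apply: allpairs_uniq => //.
by move=> [w c] [w' c'] _ _ /= /rcons_inj [-> ->].
Qed.


End M_P6.
Import M_P6.

Local Open Scope ring_scope.
Theorem proposition2p6 (n k : nat) (sigma : 'S_k) :
  (k <= n)%N -> is_derangement sigma ->
  \sum_(p : 'S_n | dp p == word sigma)
      (-1) ^+ inv_perm p * 'X^(maj_perm p)
  = (-1) ^+ inv_perm sigma * 'X^(maj_perm sigma) * qbinom n k :> {poly rat}.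
Proof.
move=> Hkn Hder.
set f := nth 0%N (word sigma).
have Hf : forall r, (r < k)%N -> f r != r by move=> r; exact: f_neq.
rewrite (eq_bigr (fun p => (-1) ^+ inv_perm sigma * 'X^(stat f (sp p)))); last first.
  move=> p /eqP Hdp.
  have G := dp_good Hdp.
  by rewrite -signr_odd (good_inv Hder G) signr_odd (good_maj Hder G).
rewrite -big_distrr /= -mulrA; congr (_ * _).
rewrite -big_filter.
set L := [seq p <- index_enum _ | dp p == word sigma].
rewrite -(big_map (@sp n) xpredT (fun w => 'X^(stat f w))).
have Hperm : perm_eq (map (@sp n) L) [seq w <- W n | count id w == k].
  apply: uniq_perm.
  - rewrite map_inj_in_uniq; first by rewrite filter_uniq // index_enum_uniq.
    move=> p p'; rewrite !mem_filter => /andP [/eqP H1 _] /andP [/eqP H2 _] E.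
    have G1 := dp_good H1; have G2 := dp_good H2.
    rewrite E in G1; exact: good_uniq G1 G2.
  - by rewrite filter_uniq // uniq_W.
  - move=> w; rewrite mem_filter mem_W; apply/mapP/idP.
    + move=> [p]; rewrite mem_filter => /andP [/eqP Hdp _] ->.
      have [Hs Hc _ _] := dp_good Hdp.
      by rewrite Hc Hs !eqxx.
    + move=> /andP [/eqP Hc /eqP Hs].
      have [p G] := good_exists Hder Hs Hc.
      exists p; last by rewrite (good_sp G).
      by rewrite mem_filter mem_index_enum andbT (good_dp G).
rewrite (perm_big _ Hperm) big_filter.
rewrite (words_total Hf Hkn) qbinomE //.
Qed.
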